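(* Every symmetric pseudo-Boolean function $f:\{0,1\}^n\to\mathbb{R}$, with $f(x)=k_{|x|}$, can be represented uniquely in the form \[ f(x)=\sum_{i=0}^{n}\alpha_i\,\min\Bigl(0,\; i-\tfrac12-\sum_{r=1}^n x_r\Bigr)\quad\text{for all }x\in\{0,1\}^n, \] where $\alpha_i=-8\sum_{j=0}^{i}(-1)^{i-j}k_j-2k_{i-1}+6k_i$ for $i=0,1,\ldots,n$, with the convention $k_{-1}=0$.
   Context: A pseudo-Boolean function is a map $\{0,1\}^n\to\mathbb{R}$; it is symmetric if there are reals $k_0,\ldots,k_n$ with $f(x)=k_l$ whenever the Hamming weight $|x|=\sum_j x_j$ equals $l$. *)

(* Defs.v *)
From HB Require Import structures.
From mathcomp Require Import all_boot all_order all_algebra.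
Set Implicit Arguments. Unset Strict Implicit. Unset Printing Implicit Defensive.
Import Order.TTheory GRing.Theory Num.Theory.
Local Open Scope ring_scope.

Definition hweight (n : nat) (x : 'I_n -> bool) : nat := (\sum_(j < n) (x j : nat))%N.

Definition symmetric_with (R : realFieldType) (n : nat)
  (f : ('I_n -> bool) -> R) (k : nat -> R) : Prop :=
  forall x, f x = k (hweight x).

Definition kprev (R : realFieldType) (k : nat -> R) (i : nat) : R :=
  if i is i'.+1 then k i' else 0.

Definition alpha (R : realFieldType) (k : nat -> R) (i : nat) : R :=
  - 8 * (\sum_(j < i.+1) (-1) ^+ (i - j) * k j) - 2 * kprev k i + 6 * k i.

Definition minterm (R : realFieldType) (n : nat) (i : nat) (x : 'I_n -> bool) : R :=
  Num.min 0 (i%:R - 2^-1 - \sum_(r < n) (x r)%:R).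

Definition rep (R : realFieldType) (n : nat) (beta : nat -> R) (x : 'I_n -> bool) : R :=
  \sum_(i < n.+1) beta i * minterm R i x.

(* Main.v *)
Require Import Defs.
From HB Require Import structures.
From mathcomp Require Import all_boot all_order all_algebra.
From mathcomp Require Import ring lra.
Import Order.TTheory GRing.Theory Num.Theory.
Local Open Scope ring_scope.

Definition G {R : realFieldType} (b : nat -> R) (w : nat) : R :=
  \sum_(i < w.+1) b i * (i%:R - 2^-1 - w%:R).

Lemma minterm_eq {R : realFieldType} {n} i (x : 'I_n -> bool) :
  minterm R i x = if (i <= hweight x)%N then i%:R - 2^-1 - (hweight x)%:R else 0.
Proof.
rewrite /minterm /hweight natr_sum.
case: leqP => H.
- have : (i%:R <= (\sum_(j < n) (x j : nat))%:R :> R) by rewrite ler_nat.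
  rewrite natr_sum => H'.
  apply: min_r. lra.
- have : ((\sum_(j < n) (x j : nat)).+1%:R <= i%:R :> R) by rewrite ler_nat.
  rewrite -addn1 natrD natr_sum => H'.
  apply: min_l. lra.
Qed.

Lemma hweight_le {n} (x : 'I_n -> bool) : (hweight x <= n)%N.
Proof.
rewrite /hweight.
apply: (@leq_trans (\sum_(j < n) 1)%N).
  by apply: leq_sum => j _; case: (x j).
by rewrite sum1_card card_ord.
Qed.

Lemma rep_G {R : realFieldType} {n} (b : nat -> R) (x : 'I_n -> bool) :
  rep b x = G b (hweight x).
Proof.
rewrite /rep /G.
have Hw := hweight_le x.
rewrite (big_ord_widen n.+1 (fun i : nat => b i * (i%:R - 2^-1 - (hweight x)%:R))) //.
rewrite [RHS]big_mkcond /=; apply: eq_bigr => i _.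
rewrite minterm_eq ltnS; case: ifP => _; by rewrite ?mulr0.
Qed.

Definition A {R : realFieldType} (k : nat -> R) (i : nat) : R :=
  \sum_(j < i.+1) (-1) ^+ (i - j) * k j.

Lemma A_S {R : realFieldType} (k : nat -> R) w : A k w.+1 = k w.+1 - A k w.
Proof.
rewrite /A big_ord_recr /= subnn expr0 mul1r addrC; congr (_ + _).
rewrite -sumrN; apply: eq_bigr => j _.
by rewrite subSn ?exprS ?mulN1r ?mulNr // -ltnS.
Qed.

Lemma alphaE {R : realFieldType} (k : nat -> R) i :
  alpha k i = - 8 * A k i - 2 * kprev k i + 6 * k i.
Proof. by []. Qed.

Lemma G_alpha {R : realFieldType} (k : nat -> R) w :
  G (alpha k) w = k w /\ \sum_(i < w.+1) alpha k i = - 4 * A k w + 2 * k w.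
Proof.
elim: w => [|w [IH1 IH2]].
- rewrite /G !big_ord1 /= alphaE /A big_ord1 /= expr0 mul1r.
  split; last lra. by field.
- have HA := A_S k w.
  split.
  + rewrite /G big_ord_recr /=.
    have -> : \sum_(i < w.+1) alpha k i * (i%:R - 2^-1 - w.+1%:R)
       = G (alpha k) w - \sum_(i < w.+1) alpha k i.
      rewrite /G -sumrB; apply: eq_bigr => i _.
      have -> : (w.+1)%:R = w%:R + 1 :> R by rewrite mulrSr.
      ring.
    rewrite IH1 IH2 alphaE /= -addn1 natrD HA. by field.
  + rewrite big_ord_recr /= IH2 alphaE /= HA. ring.
Qed.

Lemma hweight_ex {n} w : (w <= n)%N -> hweight (fun j : 'I_n => (j < w)%N) = w.
Proof.
move=> Hw; rewrite /hweight.
rewrite -(big_mkord xpredT (fun j => ((j < w)%N : nat))).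
rewrite (big_cat_nat (n:=w)) //=.
rewrite [X in (_ + X)%N]big1_seq; last first.
  by move=> j /andP [_]; rewrite mem_index_iota => /andP [H _]; rewrite ltnNge H.
rewrite addn0 -[X in _ = X]card_ord -sum1_card big_mkord.
by apply: eq_bigr => j _; rewrite ltn_ord.
Qed.

Theorem corollary1 (R : realFieldType) (n : nat)
  (f : ('I_n -> bool) -> R) (k : nat -> R) :
  symmetric_with f k ->
  (forall x, f x = rep (alpha k) x) /\
  (forall beta : nat -> R, (forall x, f x = rep beta x) ->
     forall i, (i <= n)%N -> beta i = alpha k i).
Proof.
move=> Hf; split.
- by move=> x; rewrite Hf rep_G (proj1 (G_alpha k _)).
- move=> beta Hb.
  have HG : forall w, (w <= n)%N -> G beta w = G (alpha k) w.
    move=> w Hw; rewrite (proj1 (G_alpha k w)).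
    have := Hb (fun j : 'I_n => (j < w)%N).
    by rewrite Hf rep_G hweight_ex.
  elim/ltn_ind => i IH Hi.
  have := HG i Hi; rewrite /G !big_ord_recr /=.
  have -> : \sum_(j < i) beta j * (j%:R - 2^-1 - i%:R)
          = \sum_(j < i) alpha k j * (j%:R - 2^-1 - i%:R).
    apply: eq_bigr => j _; rewrite IH //; exact: ltnW (leq_trans (ltn_ord j) Hi).
  move/addrI => H.
  have : (beta i - alpha k i) * (- 2^-1) = 0.
    rewrite -[X in _ = X](subrr (alpha k i * (i%:R - 2^-1 - i%:R))).
    rewrite -[X in _ = X - _]H. ring.
  move/eqP; rewrite mulf_eq0 oppr_eq0 invr_eq0 pnatr_eq0 orbF subr_eq0.
  by move/eqP.
Qed.
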